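(* For every $n\in\mathbb N$, the class $\mathcal T_n$ contains only finitely many isomorphism types, i.e. $\mathcal T_n/\cong$ is a finite set.
   Context: A partial monounary algebra is a pair $(A,f)$ with $A$ a nonempty set and $f$ a partial unary operation on $A$. It is connected if for all $x,y\in A$ there are $m,n\ge0$ with $f^m(x),f^n(y)$ defined and equal. $\mathcal T$ is the class of connected partial monounary algebras $(A,f)$ with exactly one element not in the domain of $f$; this element is denoted $c_A$. For $x\in A$: $f^{-1}(x)=\{y\in\mathrm{dom}f:f(y)=x\}$, $f^{-n}(x)=\bigcup_{z\in f^{-(n-1)}(x)}f^{-1}(z)$, $P(x)=\{x\}\cup\bigcup_{n\ge1}f^{-n}(x)$, regarded as a partial monounary algebra with $f$ restricted to those $y\in P(x)$ with $f(y)$ defined and in $P(x)$. Condition ($\bigstar$): whenever $x_1,x_2,x_3\in A$ with $f(x_1)=f(x_2)=f(x_3)$ and $P(x_1),P(x_2),P(x_3)$ pairwise isomorphic, then $|\{x_1,x_2,x_3\}|\le2$; $\mathcal T^\bigstar$ is the class of members of $\mathcal T$ satisfying ($\bigstar$). Degree: $A^{(\infty)}$ is the set of $x$ admitting $x_0=x,x_1,\dots$ with $x_n\in\mathrm{dom}f$, $f(x_n)=x_{n-1}$ for $n\ge1$; for ordinals $\lambda$, $A^{(\lambda)}=\{x\in A\setminus\bigcup_{\alpha<\lambda}A^{(\alpha)}: f^{-1}(x)\subseteq\bigcup_{\alpha<\lambda}A^{(\alpha)}\}$; $s_f(x)$ is the $\lambda$ with $x\in A^{(\lambda)}$, or $\infty$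 if $x\in A^{(\infty)}$ ($\infty$ exceeds all ordinals). For an ordinal $\beta$, $\mathcal T_\beta=\{(A,f)\in\mathcal T^\bigstar: 0<s_f(c_A)\le\beta\}$. *)

(* Defs.v *)
From Stdlib Require Import List Arith.

(* A partial monounary algebra: a carrier with a partial unary operation,
   encoded as a total map into [option]; [op x = None] means x is not in dom f. *)
Record pma : Type := Pma { car : Type ; op : car -> option car }.

Section PMA.
Variable A : pma.
Notation T := (car A).
Notation f := (op A).

Fixpoint fiter (m : nat) (x : T) : option T :=
  match m with
  | 0 => Some x
  | S m' => match fiter m' x with Some y => f y | None => None end
  end.

Definition nonempty : Prop := exists x : T, True.

Definition connected : Prop :=
  forall x y : T, exists m n, exists z, fiter m x = Some z /\ fiter n y = Some z.

Definition in_T : Prop :=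
  nonempty /\ connected /\ exists c : T, f c = None /\ forall x, f x = None -> x = c.

Definition Pset (x : T) (y : T) : Prop := exists m, fiter m y = Some x.

(* degree: [below k x] means x ∈ ⋃_{j<k} A^(j); [level k x] means x ∈ A^(k) *)
Fixpoint below (k : nat) (x : T) : Prop :=
  match k with
  | 0 => False
  | S k' => below k' x \/ (~ below k' x /\ forall y, f y = Some x -> below k' y)
  end.

Definition level (k : nat) (x : T) : Prop :=
  ~ below k x /\ forall y, f y = Some x -> below k y.

End PMA.

(* Isomorphism between the partial monounary algebras induced on subsets
   S1 ⊆ car A1 and S2 ⊆ car A2 (the operation restricted to those y in S
   with f y defined and in S): a bijection g : S1 -> S2 (with inverse h)
   such that, for y z in S1, f1 y = z iff f2 (g y) = g z. *)
Definition iso_on (A1 : pma) (S1 : car A1 -> Prop) (A2 : pma) (S2 : car A2 -> Prop) : Prop :=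
  exists (g : car A1 -> car A2) (h : car A2 -> car A1),
    (forall x, S1 x -> S2 (g x)) /\ (forall y, S2 y -> S1 (h y)) /\
    (forall x, S1 x -> h (g x) = x) /\ (forall y, S2 y -> g (h y) = y) /\
    (forall y z, S1 y -> S1 z -> (op A1 y = Some z <-> op A2 (g y) = Some (g z))).

Definition iso (A1 A2 : pma) : Prop :=
  iso_on A1 (fun _ => True) A2 (fun _ => True).

Definition star (A : pma) : Prop :=
  forall x1 x2 x3 : car A,
    op A x1 <> None -> op A x1 = op A x2 -> op A x2 = op A x3 ->
    iso_on A (Pset A x1) A (Pset A x2) ->
    iso_on A (Pset A x1) A (Pset A x3) ->
    iso_on A (Pset A x2) A (Pset A x3) ->
    x1 = x2 \/ x1 = x3 \/ x2 = x3.

Definition in_Tn (n : nat) (A : pma) : Prop :=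
  in_T A /\ star A /\
  exists c : car A, op A c = None /\
    ~ level A 0 c /\ exists k, k <= n /\ level A k c.

(* Main.v *)
Require Import Defs.
From Stdlib Require Import List Arith.
From Stdlib Require Import Lia Classical ClassicalEpsilon ProofIrrelevance.
Import ListNotations.

Lemma fiter_S' (A : pma) m (y : car A) :
  fiter A (S m) y = match op A y with Some z => fiter A m z | None => None end.
Proof.
  induction m; simpl.
  - destruct (op A y); reflexivity.
  - simpl in IHm. rewrite IHm. destruct (op A y); reflexivity.
Qed.

Lemma fiter_add (A : pma) a b (y : car A) :
  fiter A (a + b) y = match fiter A a y with Some w => fiter A b w | None => None end.
Proof.
  revert y; induction a; intro y.
  - reflexivity.
  - rewrite Nat.add_succ_l, !fiter_S'. destruct (op A y); [apply IHa | reflexivity].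
Qed.

Lemma below_mono (A:pma) k k' (x:car A) : k <= k' -> below A k x -> below A k' x.
Proof. induction 1; intros; [assumption| simpl; left; auto]. Qed.

Lemma below_pred (A:pma) k (x y: car A) : below A (S k) x -> op A y = Some x -> below A k y.
Proof.
  revert x y; induction k; intros x y Hb Hy.
  - simpl in Hb. destruct Hb as [[]|[_ H]]. exact (H y Hy).
  - destruct Hb as [Hb|[_ H]].
    + simpl. left. exact (IHk x y Hb Hy).
    + exact (H y Hy).
Qed.

Lemma below_iter (A:pma) m : forall k (y x : car A),
  fiter A m y = Some x -> below A k x -> m < k /\ below A (k - m) y.
Proof.
  induction m; intros k y x H Hb.
  - simpl in H. injection H as H; subst. destruct k; [simpl in Hb; contradiction|].
    split; [lia|]. rewrite Nat.sub_0_r. exact Hb.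
  - simpl in H. destruct (fiter A m y) as [w|] eqn:E; [|discriminate].
    destruct k as [|k]; [simpl in Hb; contradiction|].
    pose proof (below_pred A k x w Hb H) as Hw.
    destruct (IHm k y w E Hw) as [H1 H2].
    split; [lia|]. replace (S k - S m) with (k - m) by lia. exact H2.
Qed.

Lemma no_cycle (A:pma) k (x:car A) d : below A k x -> fiter A (S d) x = Some x -> False.
Proof.
  revert x. induction k as [k IH] using (well_founded_induction lt_wf). intros x Hb H.
  destruct (below_iter A (S d) k x x H Hb) as [Hlt Hb'].
  exact (IH (k - S d) ltac:(lia) x Hb' H).
Qed.

Lemma fiter_unique (A:pma) k (x y:car A) m m' :
  below A k x -> fiter A m y = Some x -> fiter A m' y = Some x -> m = m'.
Proof.
  intros Hb H1 H2. destruct (lt_eq_lt_dec m m') as [[Hl|He]|Hl]; auto; exfalso.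
  - replace m' with (m + S (m' - m - 1)) in H2 by lia. rewrite fiter_add, H1 in H2.
    exact (no_cycle A k x _ Hb H2).
  - replace m with (m' + S (m - m' - 1)) in H1 by lia. rewrite fiter_add, H2 in H1.
    exact (no_cycle A k x _ Hb H1).
Qed.

Lemma iso_on_sym A1 S1 A2 S2 : iso_on A1 S1 A2 S2 -> iso_on A2 S2 A1 S1.
Proof.
  intros (g & h & H1 & H2 & H3 & H4 & H5).
  exists h, g. split; [exact H2|]. split; [exact H1|]. split; [exact H4|]. split; [exact H3|].
  intros y z Hy Hz. split; intro Hop.
  - apply (proj2 (H5 (h y) (h z) (H2 y Hy) (H2 z Hz))). rewrite !H4 by assumption. exact Hop.
  - rewrite <- (H4 y Hy), <- (H4 z Hz). apply (proj1 (H5 _ _ (H2 y Hy) (H2 z Hz))). exact Hop.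
Qed.

Lemma iso_on_trans A1 S1 A2 S2 A3 S3 :
  iso_on A1 S1 A2 S2 -> iso_on A2 S2 A3 S3 -> iso_on A1 S1 A3 S3.
Proof.
  intros (g & h & H1 & H2 & H3 & H4 & H5) (g' & h' & H1' & H2' & H3' & H4' & H5').
  exists (fun x => g' (g x)), (fun y => h (h' y)).
  split; [intros; auto|]. split; [intros; auto|].
  split; [intros x Hx; rewrite H3' by auto; auto|].
  split; [intros y Hy; rewrite H4 by auto; auto|].
  intros y z Hy Hz. rewrite H5 by auto. apply H5'; auto.
Qed.

Definition Ucar (s : list (list nat)) : Type := {p : list nat | In p s}.
Definition Uop (s : list (list nat)) (q : Ucar s) : option (Ucar s) :=
  match q with
  | exist _ [] _ => None
  | exist _ (_ :: t) _ =>
      match in_dec (list_eq_dec Nat.eq_dec) t s with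
      | left H => Some (exist _ t H) | right _ => None end
  end.
Definition U s : pma := Pma (Ucar s) (Uop s).

Lemma sig_eq s (q1 q2 : Ucar s) : proj1_sig q1 = proj1_sig q2 -> q1 = q2.
Proof. destruct q1 as [p1 H1], q2 as [p2 H2]; simpl; intros <-. f_equal; apply proof_irrelevance. Qed.

Lemma Uop_some s (q q' : Ucar s) : Uop s q = Some q' -> exists a, proj1_sig q = a :: proj1_sig q'.
Proof.
  destruct q as [[|a t] H]; simpl; [discriminate|].
  destruct in_dec; [|discriminate]. intro E; injection E as <-. exists a; reflexivity.
Qed.

Lemma Uop_cons' s (q : Ucar s) a t : proj1_sig q = a :: t -> In t s ->
  exists q', Uop s q = Some q' /\ proj1_sig q' = t.
Proof.
  destruct q as [p H]; simpl; intros Hp Ht; subst p; simpl.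
  destruct (in_dec (list_eq_dec Nat.eq_dec) t s) as [H'|H']; [eexists; split; reflexivity | contradiction].
Qed.

Lemma Uop_nil s (q : Ucar s) : proj1_sig q = [] -> Uop s q = None.
Proof. destruct q as [p H]; simpl; intros Hp; subst p; reflexivity. Qed.

Fixpoint all_paths (len K : nat) : list (list nat) :=
  match len with
  | 0 => [[]]
  | S l => [] :: flat_map (fun a => map (cons a) (all_paths l K)) (seq 0 K)
  end.

Lemma all_paths_in : forall p len K, length p <= len -> Forall (fun a => a < K) p ->
  In p (all_paths len K).
Proof.
  induction p as [|a p IH]; intros len K Hl HF.
  - destruct len; simpl; auto.
  - destruct len as [|len]; simpl in Hl; [lia|]. inversion HF; subst. simpl. right.
    apply in_flat_map. exists a. split; [apply in_seq; lia|]. apply in_map. apply IH; auto; lia.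
Qed.

Fixpoint powerset {X} (l : list X) : list (list X) :=
  match l with [] => [[]] | a :: l' => powerset l' ++ map (cons a) (powerset l') end.

Lemma powerset_sub {X} (l : list X) (Q : X -> Prop) : (forall p, Q p -> In p l) ->
  exists s, In s (powerset l) /\ forall p, In p s <-> Q p.
Proof.
  revert Q; induction l as [|a l IH]; intros Q HQ.
  - exists []. split; [simpl; auto|]. intro p; split; [intros []|intro Hp; destruct (HQ p Hp)].
  - destruct (IH (fun p => Q p /\ p <> a)) as [s [Hs Hiff]].
    { intros p [Hp Hne]. destruct (HQ p Hp) as [E|H]; [subst; congruence|exact H]. }
    destruct (classic (Q a)) as [Ha|Ha].
    + exists (a :: s). split; [simpl; apply in_or_app; right; apply in_map; exact Hs|].
      intro p; split.
      * intros [<-|H]; [exact Ha|apply Hiff; exact H].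
      * intro Hp. destruct (classic (p = a)) as [->|Hne]; [left; reflexivity | right; apply Hiff; auto].
    + exists s. split; [simpl; apply in_or_app; left; exact Hs|].
      intro p; split.
      * intro H. apply Hiff in H. tauto.
      * intro Hp. apply Hiff. split; auto. intros ->; contradiction.
Qed.

Definition dummy : pma := Pma unit (fun _ => None).

Definition good (C : list pma) (A : pma) (z : car A) (i : nat) : Prop :=
  i < length C /\ iso_on A (Pset A z) (nth i C dummy) (fun _ => True).

Fixpoint chain (A : pma) (y : car A) (m : nat) : list (car A) :=
  match m with 0 => [] | S m' => y :: match op A y with Some z => chain A z m' | None => [] end end.

Definition Claim (j : nat) (C : list pma) : Prop :=
  forall A : pma, star A -> forall x : car A, below A j x ->
    exists B, In B C /\ iso_on A (Pset A x) B (fun _ => True).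

Definition cands (j K : nat) : list pma := map U (powerset (all_paths j K)).

Lemma step j C : Claim j C -> Claim (S j) (cands j (2 * length C)).
Proof.
  intros HC A Hstar x Hx.
  remember (2 * length C) as K eqn:HK.
  assert (Hgood : forall z, below A j z -> exists i, good C A z i).
  { intros z Hz. destruct (HC A Hstar z Hz) as [B [HB Hiso]].
    destruct (In_nth C B dummy HB) as [i [Hi Hn]]. exists i. split; auto. rewrite Hn; auto. }
  assert (Hclsex : exists cls : car A -> nat, forall z, below A j z -> good C A z (cls z)).
  { exists (fun z => epsilon (inhabits 0) (good C A z)). intros z Hz.
    exact (epsilon_spec _ _ (Hgood z Hz)). }
  destruct Hclsex as [cls Hcls].
  assert (Hrep : exists rep : car A -> nat -> car A, forall w i,
     (exists z, op A z = Some w /\ cls z = i /\ good C A z i) ->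
     op A (rep w i) = Some w /\ cls (rep w i) = i /\ good C A (rep w i) i).
  { exists (fun w i => epsilon (inhabits x) (fun z => op A z = Some w /\ cls z = i /\ good C A z i)).
    intros w i Hex. exact (epsilon_spec _ _ Hex). }
  destruct Hrep as [rep Hrep].
  assert (Hidxex : exists idx : car A -> nat,
    (forall z, below A j z -> idx z < K) /\
    (forall y1 y2 w, op A y1 = Some w -> op A y2 = Some w -> below A j y1 -> below A j y2 ->
       idx y1 = idx y2 -> y1 = y2)).
  { exists (fun z => 2 * cls z + match op A z with
       | Some w => if excluded_middle_informative (z = rep w (cls z)) then 0 else 1
       | None => 0 end).
    split.
    - intros z Hz. destruct (Hcls z Hz) as [Hl _].
      destruct (op A z); [destruct excluded_middle_informative|]; lia.
    - intros y1 y2 w H1 H2 Hb1 Hb2 Hid. rewrite H1, H2 in Hid.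
      assert (Hc : cls y1 = cls y2).
      { destruct excluded_middle_informative; destruct excluded_middle_informative; lia. }
      rewrite <- Hc in Hid.
      destruct (Hrep w (cls y1)) as [Hr1 [Hr2 Hr3]].
      { exists y1. split; [exact H1|]. split; [reflexivity|]. apply Hcls; auto. }
      destruct (excluded_middle_informative (y1 = rep w (cls y1))) as [E1|E1];
      destruct (excluded_middle_informative (y2 = rep w (cls y1))) as [E2|E2]; try lia.
      + congruence.
      + destruct (Hcls y1 Hb1) as [_ I1]. destruct (Hcls y2 Hb2) as [_ I2]. rewrite <- Hc in I2.
        destruct Hr3 as [_ I3].
        assert (E : y1 = y2 \/ y1 = rep w (cls y1) \/ y2 = rep w (cls y1)).
        { apply Hstar.
          - rewrite H1; discriminate.
          - congruence.
          - congruence.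
          - eapply iso_on_trans; [exact I1| apply iso_on_sym; exact I2].
          - eapply iso_on_trans; [exact I1| apply iso_on_sym; exact I3].
          - eapply iso_on_trans; [exact I2| apply iso_on_sym; exact I3]. }
        destruct E as [E|[E|E]]; [exact E| contradiction | contradiction]. }
  destruct Hidxex as [idx [Hidx Hsib]].
  assert (Hmex : exists m_of : car A -> nat, forall y, Pset A x y -> fiter A (m_of y) y = Some x).
  { exists (fun y => epsilon (inhabits 0) (fun m => fiter A m y = Some x)).
    intros y Hy. exact (epsilon_spec _ _ Hy). }
  destruct Hmex as [m_of Hm].
  assert (Hmu : forall y m, fiter A m y = Some x -> m_of y = m).
  { intros y m H. apply (fiter_unique A (S j) x y); auto. apply Hm. exists m; exact H. }
  assert (Heex : exists e : car A -> list nat, forall y, e y = map idx (chain A y (m_of y))).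
  { exists (fun y => map idx (chain A y (m_of y))). reflexivity. }
  destruct Heex as [e He].
  assert (Hex : e x = []). { rewrite He, (Hmu x 0 eq_refl). reflexivity. }
  assert (Hecons : forall y z, op A y = Some z -> Pset A x z ->
     Pset A x y /\ m_of y = S (m_of z) /\ e y = idx y :: e z).
  { intros y z Hyz Hz.
    assert (Hf : fiter A (S (m_of z)) y = Some x). { rewrite fiter_S', Hyz. apply Hm; exact Hz. }
    assert (Hmy : m_of y = S (m_of z)) by (apply Hmu; exact Hf).
    split; [exists (S (m_of z)); exact Hf|]. split; [exact Hmy|].
    rewrite !He, Hmy. simpl. rewrite Hyz. reflexivity. }
  assert (Hdecomp : forall y, Pset A x y -> y = x \/ exists z, op A y = Some z /\ Pset A x z).
  { intros y [m Hmy]. destruct m; [simpl in Hmy; left; congruence|].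
    rewrite fiter_S' in Hmy. destruct (op A y) as [z|] eqn:Ez; [|discriminate].
    right. exists z. split; [reflexivity| exists m; exact Hmy]. }
  assert (Hbelow : forall y z, op A y = Some z -> Pset A x z -> below A j y).
  { intros y z Hyz [m Hz].
    assert (Hf : fiter A (S m) y = Some x) by (rewrite fiter_S', Hyz; exact Hz).
    destruct (below_iter A (S m) (S j) y x Hf Hx) as [H1 H2].
    apply (below_mono A (S j - S m)); [lia|exact H2]. }
  assert (Hpath : forall n y, m_of y = n -> Pset A x y ->
     length (e y) = n /\ Forall (fun a => a < K) (e y)).
  { induction n; intros y Hn Hy.
    - rewrite He, Hn. simpl. auto.
    - pose proof (Hm y Hy) as F. rewrite Hn, fiter_S' in F.
      destruct (op A y) as [z|] eqn:Ez; [|discriminate].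
      assert (Hz : Pset A x z) by (exists n; exact F).
      destruct (Hecons y z Ez Hz) as [_ [Hmy E]].
      destruct (IHn z ltac:(lia) Hz) as [L1 F1].
      rewrite E. simpl. split; [lia|]. constructor; [|exact F1].
      apply Hidx. exact (Hbelow y z Ez Hz). }
  assert (Hinj : forall n y1 y2, m_of y1 = n -> Pset A x y1 -> Pset A x y2 -> e y1 = e y2 -> y1 = y2).
  { induction n; intros y1 y2 Hn H1 H2 He12.
    - assert (y1 = x). { pose proof (Hm y1 H1) as F. rewrite Hn in F. simpl in F. congruence. }
      subst y1. rewrite Hex in He12.
      destruct (Hdecomp y2 H2) as [->|[z2 [Ez2 Hz2]]]; [reflexivity|].
      destruct (Hecons y2 z2 Ez2 Hz2) as [_ [_ E]]. rewrite E in He12. discriminate.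
    - pose proof (Hm y1 H1) as F. rewrite Hn, fiter_S' in F.
      destruct (op A y1) as [z1|] eqn:Ez1; [|discriminate].
      assert (Hz1 : Pset A x z1) by (exists n; exact F).
      destruct (Hecons y1 z1 Ez1 Hz1) as [_ [Hm1 E1]].
      destruct (Hdecomp y2 H2) as [->|[z2 [Ez2 Hz2]]].
      + rewrite Hex, E1 in He12. discriminate.
      + destruct (Hecons y2 z2 Ez2 Hz2) as [_ [_ E2]].
        rewrite E1, E2 in He12. injection He12 as Hi Hez.
        assert (z1 = z2) by (apply (IHn z1 z2); auto; lia).
        subst z2. apply (Hsib y1 y2 z1); auto; [exact (Hbelow y1 z1 Ez1 Hz1)|exact (Hbelow y2 z1 Ez2 Hz2)]. }
  destruct (powerset_sub (all_paths j K) (fun p => exists y, Pset A x y /\ e y = p)) as [sub [Hsub Hiff]].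
  { intros p [y [Hy <-]].
    destruct (Hpath (m_of y) y eq_refl Hy) as [L1 F1].
    apply all_paths_in; [|exact F1].
    destruct (below_iter A (m_of y) (S j) y x (Hm y Hy) Hx). lia. }
  exists (U sub). split; [unfold cands; apply in_map; exact Hsub|].
  assert (Hin : forall y, Pset A x y -> In (e y) sub). { intros y Hy. apply Hiff. exists y; auto. }
  assert (H0 : In [] sub). { rewrite <- Hex. apply Hin. exists 0. reflexivity. }
  assert (Hgex : exists g : car A -> Ucar sub, forall y, Pset A x y -> proj1_sig (g y) = e y).
  { exists (fun y => match excluded_middle_informative (In (e y) sub) with
              left H => exist _ (e y) H | right _ => exist _ [] H0 end).
    intros y Hy. destruct excluded_middle_informative as [H|H]; [reflexivity| exfalso; apply H; apply Hin; exact Hy]. }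
  destruct Hgex as [g Hg].
  assert (Hhex : exists h : Ucar sub -> car A, forall q, Pset A x (h q) /\ e (h q) = proj1_sig q).
  { exists (fun q => epsilon (inhabits x) (fun y => Pset A x y /\ e y = proj1_sig q)).
    intro q. apply (epsilon_spec (inhabits x) (fun y => Pset A x y /\ e y = proj1_sig q)).
    apply Hiff. exact (proj2_sig q). }
  destruct Hhex as [h Hh].
  exists g, h.
  split; [intros; exact I|].
  split; [intros q _; apply Hh|].
  split.
  { intros y Hy. destruct (Hh (g y)) as [Hp He'].
    apply (Hinj _ (h (g y)) y eq_refl Hp Hy). rewrite He'. apply Hg; exact Hy. }
  split.
  { intros q _. apply sig_eq. rewrite (Hg (h q) (proj1 (Hh q))). exact (proj2 (Hh q)). }
  intros y z Hy Hz. simpl. split; intro Hop.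
  - destruct (Hecons y z Hop Hz) as [_ [_ E]].
    destruct (Uop_cons' sub (g y) (idx y) (e z)) as [q' [Hq1 Hq2]].
    { rewrite Hg by exact Hy. exact E. }
    { apply Hin; exact Hz. }
    rewrite Hq1. f_equal. apply sig_eq. rewrite Hq2, Hg by exact Hz. reflexivity.
  - destruct (Uop_some sub _ _ Hop) as [a Ha].
    rewrite (Hg y Hy), (Hg z Hz) in Ha.
    destruct (Hdecomp y Hy) as [->|[w [Ew Hw]]].
    + rewrite Hex in Ha. discriminate.
    + destruct (Hecons y w Ew Hw) as [_ [_ E]]. rewrite E in Ha. injection Ha as _ Ha.
      rewrite Ew. f_equal. apply (Hinj _ w z eq_refl Hw Hz Ha).
Qed.

Fixpoint Cs (j : nat) : list pma :=
  match j with 0 => [] | S j' => cands j' (2 * length (Cs j')) end.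

Lemma Claim_all j : Claim j (Cs j).
Proof.
  induction j.
  - intros A _ x Hx. simpl in Hx. contradiction.
  - apply step; exact IHj.
Qed.

Lemma pick_list (P : pma -> Prop) (R : pma -> pma -> Prop) (C : list pma) :
  exists L, (forall B, In B L -> P B) /\
    (forall B, In B C -> (exists A, P A /\ R A B) -> exists A', In A' L /\ R A' B).
Proof.
  induction C as [|B0 C IH].
  - exists []. split; [intros B []| intros B []].
  - destruct IH as [L [HL1 HL2]].
    destruct (classic (exists A, P A /\ R A B0)) as [[A0 [HA0 HR0]]|Hn].
    + exists (A0 :: L). split.
      * intros B [<-|HB]; auto.
      * intros B [<-|HB] Hex.
        -- exists A0; split; [left; reflexivity| exact HR0].
        -- destruct (HL2 B HB Hex) as [A' [HA' HR']]. exists A'; split; [right; exact HA'| exact HR'].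
    + exists L. split; [exact HL1|]. intros B [<-|HB] Hex; [contradiction| apply HL2; auto].
Qed.

Theorem lemma3p1 (n : nat) :
  exists L : list pma,
    (forall B, In B L -> in_Tn n B) /\
    (forall A : pma, in_Tn n A -> exists B, In B L /\ iso A B).
Proof.
  destruct (pick_list (in_Tn n) (fun A B => iso A B) (Cs (S n))) as [L [HL1 HL2]].
  exists L. split; [exact HL1|].
  intros A HA. pose proof HA as HA'.
  destruct HA' as [[Hne [Hconn Hc]] [Hstar [c [Hcop [Hnl0 [k [Hk Hlev]]]]]]].
  assert (Hb : below A (S n) c).
  { apply (below_mono A (S k)); [lia|]. simpl. right. exact Hlev. }
  destruct (Claim_all (S n) A Hstar c Hb) as [B [HB Hiso]].
  assert (Hall : forall y, Pset A c y).
  { intro y. destruct (Hconn y c) as [m1 [m2 [z [H1 H2]]]].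
    exists m1. rewrite H1. destruct m2; [simpl in H2; congruence|].
    exfalso. rewrite fiter_S', Hcop in H2. discriminate. }
  assert (HiAB : iso A B).
  { destruct Hiso as (g & h & H1 & H2 & H3 & H4 & H5). exists g, h.
    split; [intros; exact I|]. split; [intros; exact I|].
    split; [intros y _; apply H3; apply Hall|]. split; [intros y _; apply H4; exact I|].
    intros y z _ _. apply H5; apply Hall. }
  destruct (HL2 B HB (ex_intro _ A (conj HA HiAB))) as [A' [HA'L HA'B]].
  exists A'. split; [exact HA'L|].
  unfold iso in *. eapply iso_on_trans; [exact HiAB| apply iso_on_sym; exact HA'B].
Qed.
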